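(* Let $n \equiv 0 \pmod 4$ and let $C$ be a self-dual binary linear $(n,k,d)$-code. If $G$ is a generator matrix of $C$ in standard form, then the number of rows of $G$ whose weight is singly-even (i.e. congruent to $2 \bmod 4$) is even.
   Context: A binary linear $(n,k,d)$-code is a $k$-dimensional subspace of $\mathbb{F}_2^n$ with minimum distance $d$. For $x,y\in\mathbb{F}_2^n$ the inner product is $\sum_i x_iy_i \in \mathbb{F}_2$; the dual code is $C^{\perp}=\{c\in\mathbb{F}_2^n : c\cdot x=0 \ \forall x\in C\}$, and $C$ is self-dual if $C=C^{\perp}$ (so $k=n/2$). A generator matrix is in standard form if it equals $(I_k \mid A)$ with $I_k$ the $k\times k$ identity matrix and $A$ a $k\times k$ binary matrix. The weight $w(x)$ of a vector is its number of nonzero coordinates; $x$ is singly-even if $w(x)\equiv 2 \pmod 4$ and doubly-even if $w(x)\equiv 0\pmod 4$. *)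

(* Defs.v *)
From mathcomp Require Import all_boot all_order all_algebra.
Set Implicit Arguments. Unset Strict Implicit. Unset Printing Implicit Defensive.
Import GRing.Theory.
Local Open Scope ring_scope.

Definition ip n (x y : 'rV['F_2]_n) : 'F_2 := \sum_(i < n) x 0 i * y 0 i.

(* A linear code of length n is represented by a matrix whose row space is the
   code; membership of a vector x is (x <= C)%MS. *)
Definition in_code n (C : 'M['F_2]_n) (x : 'rV['F_2]_n) : bool := (x <= C)%MS.

Definition in_dual n (C : 'M['F_2]_n) (x : 'rV['F_2]_n) : bool :=
  [forall c : 'rV['F_2]_n, in_code C c ==> (ip c x == 0)].

Definition self_dual n (C : 'M['F_2]_n) : Prop :=
  forall x : 'rV['F_2]_n, in_code C x = in_dual C x.

Definition generator_matrix k n (G : 'M['F_2]_(k, n)) (C : 'M['F_2]_n) : Prop :=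
  row_free G /\ (G == C)%MS.

Definition wt n (x : 'rV['F_2]_n) : nat := #|[set j : 'I_n | x 0 j != 0]|.

Definition singly_even n (x : 'rV['F_2]_n) : bool := (wt x %% 4 == 2)%N.

(* Main.v *)
Require Import Defs.
From mathcomp Require Import all_boot all_order all_algebra.
From mathcomp Require Import zify.
Local Open Scope ring_scope.
Import GRing.Theory.

Lemma F2_cases (a : 'F_2) : a = 0 \/ a = 1.
Proof. case: a => [[|[|m]]] //= H; [left|right]; by apply/val_inj. Qed.

Lemma F2_11 : (1 + 1 : 'F_2) = 0. Proof. by apply/val_inj. Qed.

Lemma card_sum (I : finType) (P : pred I) : #|[set i | P i]| = (\sum_i (P i : nat))%N.
Proof.
rewrite -sum1_card big_mkcond /=; apply eq_bigr => j _; rewrite inE; by case: (P j).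
Qed.

Lemma wtE n (x : 'rV['F_2]_n) : wt x = (\sum_(j < n) (x 0%R j != 0%R : nat))%N.
Proof. by rewrite /wt card_sum. Qed.

Lemma ipE n (x y : 'rV['F_2]_n) :
  ip x y = (\sum_j ((x 0%R j != 0%R) && (y 0%R j != 0%R) : nat))%N%:R.
Proof.
rewrite /ip natr_sum; apply eq_bigr => j _.
case: (F2_cases (x 0 j)) => ->; case: (F2_cases (y 0 j)) => ->;
  by rewrite ?mul0r ?mulr0 ?mulr1 ?eqxx ?oner_eq0.
Qed.

Lemma wtD n (x y : 'rV['F_2]_n) :
  (wt (x + y) + 2 * \sum_j ((x 0%R j != 0%R) && (y 0%R j != 0%R) : nat) = wt x + wt y)%N.
Proof.
rewrite !wtE big_distrr -!big_split; apply eq_bigr => j _ /=; rewrite !mxE.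
case: (F2_cases (x 0 j)) => ->; case: (F2_cases (y 0 j)) => ->;
  by rewrite ?addr0 ?add0r ?F2_11 ?eqxx ?oner_eq0.
Qed.

Lemma F2_nat_eq0 m : ((m%:R : 'F_2) == 0) = ~~ odd m.
Proof.
rewrite -(inj_eq val_inj) /= val_Fp_nat // modn2; by case: (odd m).
Qed.

Lemma ip_self n (x : 'rV['F_2]_n) : ip x x = (wt x)%:R.
Proof. by rewrite ipE wtE; congr (_ %:R); apply eq_bigr => j _; rewrite andbb. Qed.

Lemma ar (a b c d e : nat) : (c %% 2 = 0 -> b = e %[mod 4] -> a + 2 * c = b + d -> a = d + e %[mod 4])%N.
Proof. move=> *; lia. Qed.

Lemma wt_sum n (C : 'M['F_2]_n) (I : Type) (r : I -> 'rV['F_2]_n) (s : seq I) :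
  self_dual C -> (forall i, in_code C (r i)) ->
  wt (\sum_(i <- s) r i) = (\sum_(i <- s) wt (r i))%N %[mod 4].
Proof.
move=> sd rc; elim: s => [|i s IH].
  rewrite !big_nil wtE big1 // => j _; by rewrite mxE eqxx.
rewrite !big_cons.
set Sm := \sum_(j <- s) r j.
have Sc : in_code C Sm by rewrite /in_code; apply: summx_sub => j _; exact: rc.
have di : in_dual C (r i) by rewrite -sd.
move/forallP: di => /(_ Sm) /implyP /(_ Sc).
rewrite ipE F2_nat_eq0 => ev.
have := wtD _ Sm (r i); rewrite addrC.
move: ev; set c := (\sum_j _)%N => ev.
have c2 : (c %% 2 = 0)%N by rewrite modn2 (negbTE ev).
move: IH; rewrite -/Sm => IH H.
exact: ar c2 IH H.
Qed.

Theorem mainTheorem1 (k : nat) (C : 'M['F_2]_(k + k)) (A : 'M['F_2]_k) :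
  (4 %| k + k)%N ->
  self_dual C ->
  generator_matrix (row_mx 1%:M A) C ->
  ~~ odd #|[set i : 'I_k | singly_even (row i (row_mx 1%:M A))]|.
Proof.
move=> H4 sd [_ GC].
set G := row_mx 1%:M A.
move/andP: GC => [GsC CsG].
have rowc i : in_code C (row i G) by exact: submx_trans (row_sub i G) GsC.
have evenrow i : ~~ odd (wt (row i G)).
  have := rowc i; rewrite sd => /forallP /(_ (row i G)) /implyP /(_ (rowc i)).
  by rewrite ip_self F2_nat_eq0.
have one_code : in_code C (const_mx 1).
  rewrite sd; apply/forallP => c; apply/implyP => cc.
  have := cc; rewrite sd => /forallP /(_ c) /implyP /(_ cc).
  suff -> : ip c (const_mx 1) = ip c c by [].
  rewrite /ip; apply eq_bigr => j _; rewrite mxE mulr1.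
  by case: (F2_cases (c 0 j)) => ->; rewrite ?mulr0 ?mulr1.
have : ((const_mx 1%R : 'rV['F_2]_(k + k)) <= G)%MS by apply: submx_trans CsG; exact: one_code.
case/submxP => x Hx.
have xE : x = const_mx 1.
  have := congr1 lsubmx Hx; rewrite /G mul_mx_row mulmx1 row_mxKl => <-.
  by apply/matrixP => i j; rewrite !mxE.
have sumE : (const_mx 1 : 'rV['F_2]_(k + k)) = \sum_i row i G.
  rewrite Hx xE mulmx_sum_row; apply eq_bigr => i _; by rewrite mxE scale1r.
have H1 := wt_sum _ _ _ (fun i => row i G) (index_enum 'I_k) sd rowc.
rewrite -sumE in H1.
have wt1 : wt (const_mx 1 : 'rV['F_2]_(k + k)) = (k + k)%N.
  rewrite wtE (eq_bigr (fun _ => 1%N)); last by move=> j _; rewrite mxE oner_eq0.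
  by rewrite sum_nat_const card_ord muln1.
rewrite wt1 in H1.
have H2 : (\sum_(i <- index_enum 'I_k) wt (row i G))%N
   = (\sum_i (2 * (singly_even (row i G) : nat)))%N %[mod 4].
  apply: (big_ind2 (fun a b => a = b %[mod 4])) => //.
    move=> a1 a2 b1 b2 h1 h2; lia.
  move=> i _; rewrite /singly_even.
  have := evenrow i; set w := wt _ => ev.
  have w2 : (w %% 2 = 0)%N by rewrite modn2 (negbTE ev).
  case: eqP => h; lia.
rewrite card_sum.
rewrite -big_distrr /= in H2.
move: H2; set cnt := (\sum_i _)%N => H2.
have : (cnt %% 2 = 0)%N by lia.
move: H2 => _. rewrite modn2. by case: (odd cnt).
Qed.
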